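(* Let $T$ be a tree with positive edge weights rooted at the homebase $r$, and let $q\ge 0$. In every cost-optimal strategy exploring $T$, for every vertex $v\ne r$: if some agent leaves the subtree $T_v$ (traverses the edge from $v$ to its parent after having visited $T_v$), then that agent has explored $T_v$ on its own, i.e., no other agent visits any vertex of $T_v$.
   Context: Exploration model: given a connected graph with positive edge weights, a homebase vertex, and invoking cost $q\ge 0$, a strategy is a sequence of moves, each either invoking a new agent (appearing at the homebase) or an agent traversing an edge incident to its current vertex. A vertex is explored when first visited; the strategy explores the graph when every vertex has been visited by some agent (agents need not return). With $k$ agents, agent $i$ traversing total distance $d_i$ (weights counted with multiplicity), the cost is $kq+\sum_i d_i$; a strategy is cost-optimal if it explores the graph with minimum cost (off-line setting). $T_v$ denotes the subtree consisting of $v$ and its descendants. *)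

(* Defs.v *)
From HB Require Import structures.
From mathcomp Require Import all_boot all_order all_algebra.
From mathcomp Require Import reals.
Set Implicit Arguments. Unset Strict Implicit. Unset Printing Implicit Defensive.
Import Order.TTheory GRing.Theory Num.Theory.
Local Open Scope ring_scope.

(* A rooted weighted tree on a finite vertex type V is given by its root r   *)
(* and a parent function par (par r = r, every vertex reaches r by iterating *)
(* par).  Its edges are {u, par u} for u <> r, and w u is the weight of the  *)
(* edge {u, par u}.                                                          *)
Section Exploration.
Variables (R : realType) (V : finType) (r : V) (par : V -> V) (w : V -> R).

Definition is_rooted_tree : Prop :=
  par r = r /\ forall v : V, exists n : nat, iter n par v = r.

Definition tadj (x y : V) : bool :=
  ((x != r) && (par x == y)) || ((y != r) && (par y == x)).

Definition eweight (x y : V) : R := if (x != r) && (par x == y) then w x else w y.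

Definition in_subtree (v u : V) : Prop := exists n : nat, iter n par u = v.

(* moves: invoke a new agent (appears at the homebase r), or agent i      *)
(* (agents numbered 0,1,... in invocation order) traverses an edge to y.   *)
Inductive move := Invoke | Step of nat & V.

(* configuration = sequence of current positions of the invoked agents *)
Definition apply_move (pos : seq V) (m : move) : seq V :=
  match m with
  | Invoke => rcons pos r
  | Step i y => set_nth r pos i y
  end.

Definition valid_move (pos : seq V) (m : move) : bool :=
  match m with
  | Invoke => true
  | Step i y => (i < size pos)%N && tadj (nth r pos i) y
  end.

Definition move_cost (q : R) (pos : seq V) (m : move) : R :=
  match m with
  | Invoke => q
  | Step i y => eweight (nth r pos i) y
  end.

(* configuration before the t-th move (t = size s : final configuration) *)
Definition config (s : seq move) (t : nat) : seq V :=
  foldl apply_move [::] (take t s).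

Definition valid_strategy (s : seq move) : Prop :=
  forall t, (t < size s)%N -> valid_move (config s t) (nth Invoke s t).

Definition visits (s : seq move) (j : nat) (x : V) : Prop :=
  exists t, (t <= size s)%N /\ (j < size (config s t))%N /\ nth r (config s t) j = x.

Definition explores (s : seq move) : Prop :=
  forall x : V, exists j, visits s j x.

(* cost = k q + sum_i d_i *)
Definition cost (q : R) (s : seq move) : R :=
  \sum_(t < size s) move_cost q (config s t) (nth Invoke s t).

Definition cost_optimal (q : R) (s : seq move) : Prop :=
  valid_strategy s /\ explores s /\
  forall s', valid_strategy s' -> explores s' -> cost q s <= cost q s'.

Definition leaves_subtree (s : seq move) (i : nat) (v : V) : Prop :=
  exists t, (t < size s)%N /\ nth Invoke s t = Step i (par v) /\
            (i < size (config s t))%N /\ nth r (config s t) i = v.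

End Exploration.

(* Main.v *)
Require Import Defs.
From HB Require Import structures.
From mathcomp Require Import all_boot all_order all_algebra.
From mathcomp Require Import reals.
From Stdlib Require Import Classical.
From mathcomp Require Import ring lra.
Import Order.TTheory GRing.Theory Num.Theory.
Local Open Scope ring_scope.

Section Proofs.
Variables (R : realType) (V : finType) (r : V) (par : V -> V) (w : V -> R) (q : R).

Definition cfg (s : seq (move V)) := foldl (apply_move r) [::] s.
Definition walk (s : seq (move V)) (k : nat) : seq V :=
  pmap (fun m => if m is Step k' y then (if k' == k then Some y else None) else None) s.
Definition ninv (s : seq (move V)) : nat :=
  count (fun m => if m is Invoke then true else false) s.
Fixpoint wcost (x : V) (L : seq V) : R :=
  if L is y :: L' then eweight r par w x y + wcost y L' else 0.

Local Notation vs := (valid_strategy r par).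

Lemma wcost_cat x L1 L2 : wcost x (L1 ++ L2) = wcost x L1 + wcost (last x L1) L2.
Proof. elim: L1 x => [|y L IH] x /=; first by rewrite add0r. by rewrite IH addrA. Qed.

Lemma valid_rcons s m : vs (rcons s m) <-> vs s /\ valid_move r par (cfg s) m.
Proof.
split.
- move=> H; split.
  + move=> t lt. have : (t < size (rcons s m))%N by rewrite size_rcons ltnS ltnW.
    move/H.
    by rewrite /config -cats1 takel_cat ?(ltnW lt) // nth_cat lt.
  + have : (size s < size (rcons s m))%N by rewrite size_rcons.
    move/H.
    by rewrite /config -cats1 take_size_cat // nth_cat ltnn subnn.
- case=> H1 H2 t; rewrite size_rcons ltnS leq_eqVlt => /orP [/eqP -> | lt].
  + by rewrite /config -cats1 take_size_cat // nth_cat ltnn subnn /=.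
  + by rewrite /config -cats1 takel_cat ?(ltnW lt) // nth_cat lt; exact: H1.
Qed.

Lemma valid_take s t : vs s -> vs (take t s).
Proof.
move=> H t' lt.
move: (lt); rewrite size_take_min leq_min => /andP [ltt lts].
rewrite /config take_takel ?(ltnW ltt) // nth_take //.
exact: H.
Qed.

Lemma cfg_rcons s m : cfg (rcons s m) = apply_move r (cfg s) m.
Proof. by rewrite /cfg foldl_rcons. Qed.

Lemma walk_cat s1 s2 k : walk (s1 ++ s2) k = walk s1 k ++ walk s2 k.
Proof. by rewrite /walk pmap_cat. Qed.

Lemma walk_rcons_inv s k : walk (rcons s (Invoke V)) k = walk s k.
Proof. by rewrite -cats1 walk_cat cats0. Qed.

Lemma walk_rcons_step s i y k :
  walk (rcons s (Step i y)) k = walk s k ++ (if i == k then [:: y] else [::]).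
Proof. by rewrite -cats1 walk_cat /walk /=; case: (i == k). Qed.

Lemma ninv_rcons s m : ninv (rcons s m) = (ninv s + (if m is Invoke then 1 else 0))%N.
Proof. by rewrite /ninv -cats1 count_cat /=; case: m. Qed.

Lemma inv s : vs s ->
  [/\ size (cfg s) = ninv s,
      (forall k, (k < ninv s)%N -> nth r (cfg s) k = last r (walk s k)),
      (forall k, (ninv s <= k)%N -> walk s k = [::]) &
      (forall k, path (tadj r par) r (walk s k))].
Proof.
elim/last_ind: s => [|s m IH] .
  by move=> _; split => // k; rewrite /walk.
move/valid_rcons => [/IH [H1 H2 H3 H4] Hm].
rewrite cfg_rcons ninv_rcons; case: m Hm => [|i y] /= Hm.
- rewrite addn1; split.
  + by rewrite size_rcons H1.
  + move=> k; rewrite ltnS leq_eqVlt => /orP [/eqP -> | lt].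
    * by rewrite nth_rcons H1 ltnn eqxx walk_rcons_inv H3.
    * by rewrite nth_rcons H1 lt walk_rcons_inv H2.
  + by move=> k lt; rewrite walk_rcons_inv H3 // ltnW.
  + by move=> k; rewrite walk_rcons_inv.
- move/andP: Hm => [lti adj]; rewrite addn0.
  split.
  + by rewrite size_set_nth H1; apply/maxn_idPr; rewrite -H1.
  + move=> k lt; rewrite nth_set_nth /= walk_rcons_step.
    case: eqP => [->|/eqP ne]; first by rewrite eqxx last_cat.
    by rewrite eq_sym (negbTE ne) cats0 H2.
  + move=> k le; rewrite walk_rcons_step H3 //.
    case: eqP => // eik; move: lti; rewrite H1 eik => /leq_trans /(_ le).
    by rewrite ltnn.
  + move=> k; rewrite walk_rcons_step; case: eqP => [<-|_]; last by rewrite cats0.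
    rewrite cats1 rcons_path H4 /=.
    by rewrite -H2 // -H1.
Qed.


Lemma cost_rcons s m : cost r par w q (rcons s m) = cost r par w q s + move_cost r par w q (cfg s) m.
Proof.
rewrite /cost size_rcons big_ord_recr; congr (_ + _).
  apply: eq_bigr => t _.
  have lt := ltn_ord t.
  have -> : (widen_ord (leqnSn (size s)) t : nat) = t by [].
  rewrite /config -cats1 (takel_cat _ (ltnW lt)) (nth_cat _ s) lt.
  by [].
have -> : ((@ord_max (size s)) : nat) = size s by [].
rewrite /config -cats1 (take_size_cat _ (erefl _)) (nth_cat _ s) ltnn subnn.
by [].
Qed.

Lemma sum_if_eq (F : nat -> R) i B : (i < B)%N ->
  \sum_(k < B) (if i == k then F k else 0) = F i.
Proof.
move=> lt; rewrite (eq_bigr (fun k : 'I_B => if (k == i :> nat) then F k else 0)).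
  by rewrite -big_mkcond big_ord1_eq lt.
by move=> k _; rewrite eq_sym.
Qed.

Lemma cost_formula s B : vs s -> (ninv s <= B)%N ->
  cost r par w q s = q * (ninv s)%:R + \sum_(k < B) wcost r (walk s k).
Proof.
elim/last_ind: s B => [|s m IH] B.
  move=> _ _; rewrite /cost big_ord0 /= mulr0 add0r big1 //.
move=> Hv.
move/valid_rcons: Hv => [Hs Hm]; have [B1 B2 B3 B4] := inv _ Hs.
rewrite cost_rcons ninv_rcons => le.
rewrite (IH B Hs); last by apply: leq_trans le; apply: leq_addr.
case: m Hm le => [|i y] /= Hm le.
- have -> : \sum_(k < B) wcost r (walk (rcons s (Invoke V)) k) = \sum_(k < B) wcost r (walk s k).
    by apply: eq_bigr => k _; rewrite walk_rcons_inv.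
  by rewrite natrD mulrDr mulr1 addrAC.
- move/andP: Hm => [lti adj]; rewrite addn0 in le.
  have -> : \sum_(k < B) wcost r (walk (rcons s (Step i y)) k) = \sum_(k < B) (wcost r (walk s k) + (if i == k then eweight r par w (last r (walk s i)) y else 0)).
    apply: eq_bigr => k _; rewrite walk_rcons_step wcost_cat; case: eqP => [<-|_] /=; first by rewrite addr0.
    by [].
  rewrite big_split /= (sum_if_eq (fun=> eweight r par w (last r (walk s i)) y)); last by apply: leq_trans le; rewrite -B1.
  by rewrite B2 -?B1 // addn0 addrA.
Qed.

Lemma visits_rcons s m k x : visits r (rcons s m) k x <->
  visits r s k x \/ ((k < size (cfg (rcons s m)))%N /\ nth r (cfg (rcons s m)) k = x).
Proof.
split.
- case=> t [le [lk nk]]; move: le; rewrite size_rcons leq_eqVlt => /orP [/eqP e | lt].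
  + right; move: lk nk; rewrite /config e -(size_rcons s m) take_size /cfg; done.
  + left; exists t; rewrite ltnS in lt; split => //.
    by rewrite /config -cats1 takel_cat // in lk nk.
- case=> [[t [le [lk nk]]] | [lk nk]].
  + exists t; split; first by rewrite size_rcons leqW.
    by rewrite /config -cats1 takel_cat.
  + exists (size (rcons s m)); rewrite /config take_size; done.
Qed.

Lemma walk_rcons_ex s m k : exists e, walk (rcons s m) k = walk s k ++ e.
Proof. by rewrite -cats1 walk_cat; eexists. Qed.

Lemma visits_char s k x : vs s ->
  (visits r s k x <-> (k < ninv s)%N /\ x \in r :: walk s k).
Proof.
elim/last_ind: s => [|s m IH].
  move=> _; split.
    by case=> t [le [lk _]]; move: le lk; rewrite leqn0 => /eqP ->.
  by case.
move=> Hv; have [A1 A2 A3 A4] := inv _ Hv.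
move/valid_rcons: Hv => [Hs Hm]; have [B1 B2 B3 B4] := inv _ Hs.
rewrite visits_rcons (IH Hs) A1; split.
- case => [[lk xin]|[lk nk]].
  + split; first by rewrite ninv_rcons; apply: leq_trans lk _; apply: leq_addr.
    have [e ->] := walk_rcons_ex s m k.
    move: xin; rewrite !inE mem_cat => /orP [->//|->]; by rewrite orbT.
  + by split => //; rewrite -nk A2 // mem_last.
- case=> lk xin.
  case: m Hm lk xin A1 A2 A3 A4 => [|i y] /= Hm lk xin A1 A2 A3 A4.
  + rewrite walk_rcons_inv in xin.
    have : (k < ninv s)%N || (k == ninv s).
      by move: lk; rewrite ninv_rcons addn1 ltnS leq_eqVlt orbC.
    case/orP => [lk' | /eqP ek]; first by left.
    right; split => //; rewrite A2 // walk_rcons_inv B3 ?ek //=.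
    by move: xin; rewrite B3 ?ek // inE => /eqP.
  + rewrite walk_rcons_step in xin; move: xin; rewrite inE mem_cat.
    case/orP => [xr|/orP [xin | xin]].
    * by left; split; [rewrite ninv_rcons addn0 in lk|rewrite inE xr].
    * by left; split; [rewrite ninv_rcons addn0 in lk|rewrite inE xin orbT].
    * right; split => //; rewrite A2 // walk_rcons_step.
      by move: xin; case: eqP => // _; rewrite inE => /eqP ->; rewrite last_cat.
Qed.


Definition build n (f : nat -> seq V) :=
  flatten (mkseq (fun k => (Invoke V) :: map (Step k) (f k)) n).

Lemma build_S n f : build n.+1 f = rcons (build n f) (Invoke V) ++ map (Step n) (f n).
Proof. by rewrite /build mkseqS -cats1 flatten_cat /= cats0 cat_rcons. Qed.

Lemma walk_map_step n L k : walk (map (Step n) L) k = if n == k then L else [::].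
Proof.
elim: L => [|y L IH]; first by case: (n == k).
by rewrite /walk /= in IH *; case: (n == k) IH => /= ->.
Qed.

Lemma ninv_map_step n L : ninv (map (Step n) L) = 0%N.
Proof. by elim: L. Qed.

Lemma ninv_cat s1 s2 : ninv (s1 ++ s2) = (ninv s1 + ninv s2)%N.
Proof. by rewrite /ninv count_cat. Qed.

Lemma valid_app_steps s k L : vs s -> (k < ninv s)%N ->
  path (tadj r par) (last r (walk s k)) L -> vs (s ++ map (Step k) L).
Proof.
elim/last_ind: L => [|L y IH] Hs lk Hp; first by rewrite cats0.
rewrite map_rcons -rcons_cat; apply/valid_rcons.
rewrite rcons_path in Hp; case/andP: Hp => Hp1 Hp2.
have Hv := IH Hs lk Hp1; split => //.
have [A1 A2 _ _] := inv _ Hv.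
have en : ninv (s ++ map (Step k) L) = ninv s by rewrite ninv_cat ninv_map_step addn0.
rewrite /= A1 en lk /= A2 ?en // walk_cat walk_map_step eqxx last_cat //.
Qed.

Lemma build_props n f : (forall k, (k < n)%N -> path (tadj r par) r (f k)) ->
  [/\ vs (build n f), ninv (build n f) = n &
      forall k, walk (build n f) k = if (k < n)%N then f k else [::]].
Proof.
elim: n => [|n IH] Hp.
  by split => //; move=> t; rewrite /build /=.
have [v0 n0 w0] := IH (fun k lt => Hp k (leqW lt)).
have Hv1 : vs (rcons (build n f) (Invoke V)) by apply/valid_rcons.
have ni1 : ninv (rcons (build n f) (Invoke V)) = n.+1 by rewrite ninv_rcons n0 addn1.
rewrite build_S; split.
- apply: valid_app_steps => //; first by rewrite ni1.
  rewrite walk_rcons_inv w0 ltnn /=; exact: Hp.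
- by rewrite ninv_cat ni1 ninv_map_step addn0.
- move=> k; rewrite walk_cat walk_rcons_inv w0 walk_map_step.
  case: (ltngtP k n) => [lt|gt|->].
  + by rewrite ltnS (ltnW lt) cats0.
  + by rewrite ltnS leqNgt gt.
  + by rewrite ltnSn.
Qed.


Lemma sub_par v x : in_subtree par v (par x) -> in_subtree par v x.
Proof. by case=> n h; exists n.+1; rewrite iterSr. Qed.

Lemma sub_par2 v x : in_subtree par v x -> x != v -> in_subtree par v (par x).
Proof.
case=> [[|n] h] ne; first by rewrite /= in h; rewrite h eqxx in ne.
by exists n; rewrite -iterSr.
Qed.

Lemma root_not_sub v : par r = r -> v != r -> ~ in_subtree par v r.
Proof.
move=> pr ne [n h].
have e : iter n par r = r by elim: n {h} => //= n ->.
by rewrite h in e; rewrite e eqxx in ne.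
Qed.

Lemma cross v x y : ~ in_subtree par v x -> in_subtree par v y ->
  tadj r par x y -> y = v /\ x = par v.
Proof.
move=> nx sy /orP [/andP [_ /eqP pxy] | /andP [_ /eqP pyx]].
- by exfalso; apply: nx; apply: sub_par; rewrite pxy.
- case: (eqVneq y v) => [e | ne]; first by subst y.
  by exfalso; apply: nx; rewrite -pyx; exact: sub_par2.
Qed.

Arguments cross {v x y}.

Lemma crossing v L x : path (tadj r par) x L -> ~ in_subtree par v x ->
  (exists2 y, y \in L & in_subtree par v y) ->
  exists Q Z, L = Q ++ v :: Z /\ last x Q = par v.
Proof.
elim: L x => [|y L IH] x /=; first by move=> _ _ [y].
move=> /andP [a p] nx [z zin sz].
case: (classic (in_subtree par v y)) => [sy | nsy].
- by have [-> ->] := cross nx sy a; exists [::], L.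
- have [Q [Z [eL lQ]]] : exists Q Z, L = Q ++ v :: Z /\ last y Q = par v.
    apply: IH => //; exists z => //.
    by move: zin; rewrite inE => /orP [/eqP e|//]; subst z.
  by exists (y :: Q), Z; rewrite eL.
Qed.

Arguments crossing {v L x}.
Arguments root_not_sub {v}.
Arguments cost_formula {s B}.
Arguments valid_take {s} t.
Arguments build_props {n f}.

Lemma main (rooted : is_rooted_tree r par) (wpos : forall u, u != r -> 0 < w u)
  s (opt : cost_optimal r par w q s) v i (vr : v != r)
  (lv : leaves_subtree r par s i v) j u (ji : j <> i)
  (su : in_subtree par v u) (vj : visits r s j u) : False.
Proof.
case: opt => [Hs [Hex Hopt]].
have [A1 A2 A3 A4] := inv _ Hs.
have rnot : ~ in_subtree par v r := root_not_sub rooted.1 vr.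
have [jn ujin] := (visits_char s j u Hs).1 vj.
have uW : u \in walk s j.
  by move: ujin; rewrite inE => /orP [/eqP e|//]; subst u.
have [C [D [eWj lC]]] := crossing (A4 j) rnot (ex_intro2 _ _ u uW su).
case: lv => t [lts [ht [lti hv]]].
have Hs0 := valid_take t Hs.
have [B1 B2 B3 B4] := inv _ Hs0.
have lti' : (i < ninv (take t s))%N by rewrite -B1; exact: lti.
have hX : last r (walk (take t s) i) = v by rewrite -B2 //; exact: hv.
have eWi : walk s i = walk (take t s) i ++ par v :: walk (drop t.+1 s) i.
  by rewrite -{1}(cat_take_drop t.+1 s) walk_cat (take_nth (Invoke V) lts) ht
     walk_rcons_step eqxx -catA.
have in_n : (i < ninv s)%N.
  rewrite -(cat_take_drop t s) ninv_cat; apply: leq_trans lti' _; exact: leq_addr.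
have vX : exists2 y, y \in walk (take t s) i & in_subtree par v y.
  exists v; last by exists 0%N.
  by have := mem_last r (walk (take t s) i); rewrite hX inE => /orP [/eqP e|//]; rewrite e eqxx in vr.
have [Q1 [Z [eX lQ]]] := crossing (B4 i) rnot vX.
have lZ : last v Z = v by move: hX; rewrite eX last_cat lQ.
move: eWi; rewrite eX; set Y := walk (drop t.+1 s) i => eWi.
have pWi := A4 i.
rewrite eWi -catA cat_path lQ /= cat_path lZ /= in pWi.
case/andP: pWi => pQ1 /andP [tpv /andP [pZ /andP [tvp pY]]].
have pWj := A4 j.
rewrite eWj cat_path lC /= in pWj.
case/andP: pWj => pC /andP [_ pD].
pose g k := if k == i then Q1 ++ Y else if k == j then C ++ v :: (Z ++ D) else walk s k.
have Hg : forall k, (k < ninv s)%N -> path (tadj r par) r (g k).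
  move=> k _; rewrite /g; case: eqP => _; first by rewrite cat_path lQ pQ1 pY.
  case: eqP => _; last exact: A4.
  by rewrite cat_path lC pC /= tpv cat_path pZ lZ pD.
have [Hv' n' w'] := build_props Hg.
have jni : (j == i) = false by apply/eqP.
have Hex' : explores r (build (ninv s) g).
  move=> x; have [k vk] := Hex x.
  have [kn xk] := (visits_char s k x Hs).1 vk.
  suff [k' [k'n xk']] : exists k', (k' < ninv s)%N /\ x \in r :: g k'.
    by exists k'; apply/(visits_char _ _ _ Hv'); rewrite n' w' k'n.
  rewrite /g; case: (eqVneq k i) => [ek | nki].
  - subst k; move: xk; rewrite eWi -catA !(inE, mem_cat).
    case/orP => [h|/orP [h|/orP [h|/orP [h|/orP [h|h]]]]].
    + by exists i; rewrite eqxx !(inE, mem_cat) h.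
    + by exists i; rewrite eqxx !(inE, mem_cat) h ?orbT.
    + by exists j; rewrite jni eqxx !(inE, mem_cat) h ?orbT.
    + by exists j; rewrite jni eqxx !(inE, mem_cat) h ?orbT.
    + exists i; rewrite eqxx; split => //.
      have := mem_last r Q1; rewrite lQ -(eqP h) -cat_cons mem_cat => ->; done.
    + by exists i; rewrite eqxx !(inE, mem_cat) h ?orbT.
  - case: (eqVneq k j) => [ekj | nkj].
    + subst k; exists j; rewrite jni eqxx; split => //.
      move: xk; rewrite eWj !(inE, mem_cat).
      by case/orP => [h|/orP [h|/orP [h|h]]]; rewrite h ?orbT.
    + by exists k; rewrite (negbTE nki) (negbTE nkj).
have c1 := cost_formula Hs (leqnn (ninv s)).
have c2 := cost_formula Hv' (eq_leq n').
have := Hopt _ Hv' Hex'; rewrite c1 c2 n'.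
have -> : \sum_(k < ninv s) wcost r (walk (build (ninv s) g) k) = \sum_(k < ninv s) wcost r (g k).
  by apply: eq_bigr => k _; rewrite w' ltn_ord.
set a := eweight r par w (par v) v + wcost v Z + eweight r par w v (par v).
set b := wcost v Z.
have -> : \sum_(k < ninv s) wcost r (walk s k) =
  \sum_(k < ninv s) (wcost r (g k) + (if i == k then a else 0) - (if j == k then b else 0)).
  apply: eq_bigr => k _; rewrite /g.
  case: (eqVneq (k : nat) i) => [->|nki].
    rewrite ?eqxx jni subr0 eWi -catA !wcost_cat lQ /= ?wcost_cat lZ /a; lra.
  rewrite ?addr0; case: (eqVneq (k : nat) j) => [->|nkj].
    rewrite ?eqxx eWj !wcost_cat lC /= ?wcost_cat ?lZ /b; lra.
  by rewrite ?subr0.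
rewrite sumrB big_split /=.
rewrite (sum_if_eq (fun=> a)) // (sum_if_eq (fun=> b)) //.
have ev : 0 < eweight r par w v (par v) by rewrite /eweight vr eqxx /=; exact: wpos.
have ep : 0 < eweight r par w (par v) v.
  by rewrite /eweight; case: ifP => [/andP [h _]|_]; apply: wpos.
rewrite /a /b; lra.
Qed.

End Proofs.

Theorem lemma2 (R : realType) (V : finType) (r : V) (par : V -> V) (w : V -> R)
  (q : R) (s : seq (move V)) :
  is_rooted_tree r par ->
  (forall u : V, u != r -> 0 < w u) ->
  0 <= q ->
  cost_optimal r par w q s ->
  forall (v : V) (i : nat), v != r ->
    leaves_subtree r par s i v ->
    forall (j : nat) (u : V), j <> i -> in_subtree par v u -> ~ visits r s j u.
Proof.
move=> rooted wpos _ opt v i vr lv j u ji su vj.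
exact: (@main R V r par w q rooted wpos s opt v i vr lv j u ji su vj).
Qed.
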